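(* Let $\Gamma$ be an Arf numerical semigroup with conductor $c$ and multiplicity $e\ge3$. Then $c+e-2$ or $c+e-3$ is an irreducible element of $\Gamma$.
   Context: A numerical semigroup is a subset $\Gamma\subseteq\mathbb N$ containing $0$, closed under addition, with finite complement; write $\Gamma=\{0=\rho_1<\rho_2<\cdots\}$; multiplicity $e=\rho_2$; conductor $c$ = least integer with $c+\mathbb N\subseteq\Gamma$. $\Gamma$ is Arf if $\rho_i+\rho_j-\rho_k\in\Gamma$ for all $i\ge j\ge k$. A nonzero $s\in\Gamma$ is irreducible if it cannot be written as a sum of two nonzero elements of $\Gamma$ (equivalently, its only divisors $t\in\Gamma$ with $s-t\in\Gamma$ are $0$ and $s$). *)

(* Defs.v *)
From mathcomp Require Import all_boot.
Set Implicit Arguments. Unset Strict Implicit. Unset Printing Implicit Defensive.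

Definition numerical_semigroup (S : pred nat) : Prop :=
  [/\ S 0,
      (forall x y, S x -> S y -> S (x + y)) &
      exists N, forall n, N <= n -> S n].

Definition is_conductor (S : pred nat) (c : nat) : Prop :=
  (forall n, c <= n -> S n) /\ (forall m, (forall n, m <= n -> S n) -> c <= m).

Definition is_multiplicity (S : pred nat) (e : nat) : Prop :=
  [/\ 0 < e, S e & forall x, 0 < x -> S x -> e <= x].

(* Arf: rho_i + rho_j - rho_k in S for i >= j >= k, i.e. x + y - z in S for
   elements x >= y >= z of S. *)
Definition arf (S : pred nat) : Prop :=
  forall x y z, S x -> S y -> S z -> y <= x -> z <= y -> S (x + y - z).

Definition irreducible (S : pred nat) (s : nat) : Prop :=
  [/\ S s, 0 < s & forall a b, S a -> S b -> 0 < a -> 0 < b -> a + b <> s].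

(* Main.v *)
Require Import Defs.
From mathcomp Require Import all_boot.
From mathcomp Require Import zify.
From Stdlib Require Import Classical.
Set Implicit Arguments.

Lemma arf_sub (S : pred nat) e a b : arf S -> is_multiplicity S e ->
  S a -> S b -> 0 < a -> 0 < b -> S (a + b - e) /\ e <= a /\ e <= b.
Proof.
move=> HA [e0 Se Hm] Sa Sb a0 b0.
have ea := Hm a a0 Sa; have eb := Hm b b0 Sb.
split; last by [].
case: (leqP b a) => h.
- exact: HA.
- have := HA b a e Sb Sa Se (ltnW h) ea. by rewrite addnC.
Qed.

Lemma red_ex (S : pred nat) c s : is_conductor S c -> c <= s -> 0 < s ->
  ~ irreducible S s -> exists a b, [/\ S a, S b, 0 < a, 0 < b & a + b = s].
Proof.
move=> [Hc _] hs s0 Hn.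
apply: NNPP => H; apply: Hn; split => //; first exact: Hc.
move=> a b Sa Sb a0 b0 E; apply: H; by exists a, b.
Qed.

Theorem proposition4p7 (S : pred nat) (c e : nat) :
  numerical_semigroup S -> arf S -> is_conductor S c -> is_multiplicity S e ->
  3 <= e ->
  irreducible S (c + e - 2) \/ irreducible S (c + e - 3).
Proof.
move=> _ HA Hc Hm e3.
case: (classic (irreducible S (c + e - 2))) => H2; first by left.
case: (classic (irreducible S (c + e - 3))) => H3; first by right.
exfalso.
have c1 : 0 < c.
  case: (posnP c) => // c0.
  have S1 : S 1 by case: Hc => Hc1 _; apply: Hc1; rewrite c0.
  case: Hm => _ _ Hm; have := Hm 1 isT S1; lia.
have [a [b [Sa Sb a0 b0 E]]] := @red_ex S c (c + e - 2) Hc ltac:(lia) ltac:(lia) H2.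
have [a' [b' [Sa' Sb' a0' b0' E']]] := @red_ex S c (c + e - 3) Hc ltac:(lia) ltac:(lia) H3.
have [S1 [ea eb]] := @arf_sub S e a b HA Hm Sa Sb a0 b0.
have [S2 [ea' eb']] := @arf_sub S e a' b' HA Hm Sa' Sb' a0' b0'.
have E1 : a + b - e = c - 2 by lia.
have E2 : a' + b' - e = c - 3 by lia.
rewrite E1 in S1; rewrite E2 in S2.
have S3 := HA _ _ _ S1 S1 S2 (leqnn _) ltac:(lia).
have E3 : c - 2 + (c - 2) - (c - 3) = c - 1 by lia.
rewrite E3 in S3.
case: Hc => Hc1 Hc2.
have : c <= c - 1.
  apply: Hc2 => n hn.
  case: (ltnP n c) => h; last exact: Hc1.
  have -> : n = c - 1 by lia.
  exact: S3.
lia.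
Qed.
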